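(* Let $\nu\ge2$ and $2\le n,m\le\nu$ be integers. Let $A(\nu;n,m)$ be the matrix with $m-1$ rows and $n+m-2$ columns whose $i$-th row ($1\le i\le m-1$) has the entries $\nu-n+1,\nu-n+2,\ldots,\nu$ in columns $i,i+1,\ldots,i+n-1$ respectively, and $0$ in all other columns; define $A(\nu;m,n)$ analogously with the roles of $n$ and $m$ exchanged (so it has $n-1$ rows and $n+m-2$ columns). Let $X(\nu;n,m)$ be the $(n+m-2)\times(n+m-2)$ matrix obtained by placing $A(\nu;n,m)$ on top of $A(\nu;m,n)$. If one marks $n+m-2$ nonzero entries of $X(\nu;n,m)$ such that each row and each column contains exactly one marked entry, then the sum of the marked entries equals $$(\nu-n+1)(m-1)+\nu(n-1).$$ *)

(* Defs.v *)
From mathcomp Require Import all_boot all_order all_algebra all_fingroup.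
Set Implicit Arguments. Unset Strict Implicit. Unset Printing Implicit Defensive.

(* Entry (0-indexed row i, column j) of A(nu; n, m):
   row i has nu-n+1, ..., nu in columns i, ..., i+n-1, and 0 elsewhere.
   (The number of rows, m-1, is imposed where A is used.) *)
Definition A_entry (nu n : nat) (i j : nat) : nat :=
  if (i <= j) && (j <= i + n - 1) then nu - n + 1 + (j - i) else 0.

Definition X_entry (nu n m : nat) (r j : nat) : nat :=
  if r < m - 1 then A_entry nu n r j else A_entry nu m (r - (m - 1)) j.

Definition Xmat (nu n m : nat) : 'M[nat]_(n + m - 2) :=
  \matrix_(r < n + m - 2, j < n + m - 2) X_entry nu n m r j.

(* Main.v *)
Require Import Defs.
From mathcomp Require Import all_boot all_order all_algebra all_fingroup.
From mathcomp Require Import zify.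

Lemma key (nu n m r j : nat) : n <= nu -> m <= nu -> r < n + m - 2 ->
  X_entry nu n m r j != 0 ->
  X_entry nu n m r j + (if r < m - 1 then r else r - (m - 1)) =
  (if r < m - 1 then nu - n + 1 else nu - m + 1) + j.
Proof.
move=> hn hm hr; rewrite /X_entry /A_entry.
case: (r < m - 1); case: ifP => // /andP [h1 h2] _; lia.
Qed.

Lemma splitsum (F : nat -> nat) a b :
  \sum_(0 <= r < a + b) F r = \sum_(0 <= r < a) F r + \sum_(0 <= r < b) F (r + a).
Proof.
rewrite (big_cat_nat _ (leq_addr b a)) //=; congr (_ + _).
by rewrite -{1}(add0n a) big_addn addKn.
Qed.

Theorem lemma2p30 (nu n m : nat) (hnu : 2 <= nu) (hn : 2 <= n) (hnnu : n <= nu)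
    (hm : 2 <= m) (hmnu : m <= nu) (s : 'S_(n + m - 2)) :
  (forall r : 'I_(n + m - 2), Xmat nu n m r (s r) != 0) ->
  \sum_(r < n + m - 2) Xmat nu n m r (s r) = (nu - n + 1) * (m - 1) + nu * (n - 1).
Proof.
move=> hnz.
set N := n + m - 2.
set off := fun r : nat => if r < m - 1 then r else r - (m - 1).
set c := fun r : nat => if r < m - 1 then nu - n + 1 else nu - m + 1.
have E : \sum_(r < N) Xmat nu n m r (s r) + \sum_(r < N) off r =
         \sum_(r < N) c r + \sum_(r < N) (r : nat).
  have -> : \sum_(r < N) (r : nat) = \sum_(r < N) (s r : nat).
    by rewrite (reindex_inj (@perm_inj _ s)).
  rewrite -!big_split /=.
  apply: eq_bigr => r _; rewrite mxE; apply: key => //.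
  by have := hnz r; rewrite mxE.
have hN : N = (m - 1) + (n - 1) by rewrite /N; lia.
have Hsplit : forall F : nat -> nat, \sum_(r < N) F r =
   \sum_(0 <= r < m - 1) F r + \sum_(0 <= r < n - 1) F (r + (m - 1)).
  by move=> F; rewrite -(big_mkord xpredT F) hN splitsum.
move: E; rewrite !Hsplit.
have Hl : forall (F G : nat -> nat), (forall r, r < m - 1 -> F r = G r) ->
  \sum_(0 <= r < m - 1) F r = \sum_(0 <= r < m - 1) G r.
  move=> F G H; rewrite big_nat_cond [RHS]big_nat_cond; apply: eq_bigr => i /andP[/andP[_ hi] _].
  exact: H.
have Hr : forall (F G : nat -> nat), (forall r, r < n - 1 -> F r = G r) ->
  \sum_(0 <= r < n - 1) F r = \sum_(0 <= r < n - 1) G r.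
  move=> F G H; rewrite big_nat_cond [RHS]big_nat_cond; apply: eq_bigr => i /andP[/andP[_ hi] _].
  exact: H.
rewrite (Hl off id); last by move=> r hr; rewrite /off hr.
rewrite (Hl c (fun=> nu - n + 1)); last by move=> r hr; rewrite /c hr.
rewrite (Hr (fun r => off (r + (m - 1))) id); last by move=> r hr; rewrite /off ltnNge leq_addl /= addnK.
rewrite (Hr (fun r => c (r + (m - 1))) (fun=> nu - m + 1)); last by move=> r hr; rewrite /c ltnNge leq_addl.
rewrite !sum_nat_const_nat !subn0.
have HT : \sum_(r < N) (r : nat) =
  \sum_(0 <= r < m - 1) r + \sum_(0 <= r < n - 1) r + (n - 1) * (m - 1).
  rewrite (Hsplit id) big_split /= sum_nat_const_nat subn0.
  by rewrite addnA.
rewrite HT.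
have HB : (n - 1) * (nu - m + 1) + (n - 1) * (m - 1) = nu * (n - 1).
  rewrite -mulnDr mulnC; congr (_ * _); lia.
rewrite mulnC.
move: HB; move: ((n - 1) * (nu - m + 1)) => B; move: ((n - 1) * (m - 1)) => C.
move: ((nu - n + 1) * (m - 1)) => A; move: (nu * (n - 1)) => D.
move: (\sum_(r < N) Xmat nu n m r (s r)) => X.
move: (\sum_(0 <= r < m - 1) r) => P; move: (\sum_(0 <= r < n - 1) r) => Q.
lia.
Qed.
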